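(* Let $n\geq 4$ and $m=\lfloor (n-2)/2\rfloor$. Then \[R_n(z)=(1+z)^m\sum_{q} z^{\mathrm{run}(q)},\] where the sum is over all permutations $q$ of length $n$ that are minimal in their orbit under the action of $G_m$. In particular, $R_n(z)$ is divisible by $(1+z)^m$.
   Context: For a permutation $p=p_1p_2\cdots p_n$ and an index $i\in[2,n-1]$, $p$ changes direction at $i$ if $p_{i-1}<p_i>p_{i+1}$ or $p_{i-1}>p_i<p_{i+1}$; $\mathrm{run}(p)=k$ means $p$ changes direction exactly $k-1$ times (the number of alternating runs). $R_n(z)=\sum_p z^{\mathrm{run}(p)}$, summed over all permutations $p$ of length $n$. For a string $s$ of distinct integers with underlying set $S$, its complement relative to $S$ is obtained by replacing, for each $j$, the $j$th smallest element of $S$ by the $j$th largest element of $S$. For $1\leq i\leq n$, $c_i$ is the map on permutations of length $n$ that leaves $p_1\cdots p_{i-1}$ unchanged and replaces $p_ip_{i+1}\cdots p_n$ by its complement relative to $\{p_i,\dots,p_n\}$. If $n$ is even, $\mathcal C_n=\{c_3,c_5,\dots,c_{n-1}\}$; if $n$ is odd, $\mathcal C_n=\{c_3,c_5,\dots,c_{n-2}\}$; $G_m\cong(\mathbb Z_2)^m$ is the group generated by $\mathcal C_n$ (these are pairwise commuting involutions), acting on permutations of length $n$. A permutation $q$ is minimal in its orbit if it has the smallest number of alternating runs among all permutations in its $G_m$-orbit (there is exactly one such permutation in each orbit). *)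

(* Defs.v *)
From mathcomp Require Import all_boot all_order all_algebra.
Set Implicit Arguments. Unset Strict Implicit. Unset Printing Implicit Defensive.
Import GRing.Theory.

(* A permutation of length n is modelled as an injective function
   'I_n -> 'I_n (values 0..n-1 at positions 0..n-1; position k here is
   position k+1 of the paper). *)
Definition word (n : nat) := {ffun 'I_n -> 'I_n}.

Section Defs.
Variable n : nat.

Definition wval (p : word n) (k : nat) : nat :=
  if k < n =P true is ReflectT h then val (p (Ordinal h)) else 0.

Definition turn (p : word n) (k : nat) : bool :=
  ((wval p k.-1 < wval p k) && (wval p k > wval p k.+1)) ||
  ((wval p k.-1 > wval p k) && (wval p k < wval p k.+1)).

Definition run (p : word n) : nat :=
  (\sum_(1 <= k < n.-1) turn p k).+1.

Definition Rpoly : {poly int} :=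
  \sum_(p : word n | injectiveb p) 'X^(run p).

Definition rank_in (S : {set 'I_n}) (v : 'I_n) : nat :=
  #|[set u in S | u < v]|.

Definition compl_in (S : {set 'I_n}) (v : 'I_n) : 'I_n :=
  odflt v [pick w in S | rank_in S w == #|S| - 1 - rank_in S v].

(* c_i (paper's 1-indexed i): positions i..n, i.e. 0-indexed k >= i-1 *)
Definition suffix_set (i : nat) (p : word n) : {set 'I_n} :=
  [set v : 'I_n | [exists k : 'I_n, (i.-1 <= k) && (p k == v)]].

Definition cmap (i : nat) (p : word n) : word n :=
  [ffun k : 'I_n => if i.-1 <= k then compl_in (suffix_set i p) (p k)
                    else p k].

Definition Cidx (i : nat) : bool :=
  if ~~ odd n then [&& odd i, 3 <= i & i <= n.-1]
  else [&& odd i, 3 <= i & i <= n - 2].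

(* one generator step, and the orbit under the group generated by C_n
   (the generators are involutions, so the orbit is the closure under
   generator steps) *)
Definition gstep : rel (word n) :=
  fun p q => [exists i : 'I_n.+1, Cidx i && (q == cmap i p)].

Definition in_orbit (p q : word n) : bool := connect gstep p q.

Definition minimal_in_orbit (q : word n) : bool :=
  injectiveb q && [forall q' : word n, in_orbit q q' ==> (run q <= run q')].

End Defs.

(* Main.v *)
Require Import Defs.
From mathcomp Require Import all_boot all_order all_algebra zify.
Import GRing.Theory.
Set Implicit Arguments. Unset Strict Implicit. Unset Printing Implicit Defensive.

Section Compl.
Variable n : nat.
Implicit Types (S : {set 'I_n}) (u v w : 'I_n).

Lemma rank_lt S v : v \in S -> rank_in S v < #|S|.
Proof.
move=> vS; apply: proper_card; apply/properP; split.
  by apply/subsetP=> u; rewrite inE => /andP[].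
by exists v => //; rewrite inE ltnn andbF.
Qed.

Lemma rank_mono S u v : u \in S -> u < v -> rank_in S u < rank_in S v.
Proof.
move=> uS uv; apply: proper_card; apply/properP; split.
  apply/subsetP=> w; rewrite !inE => /andP[-> wu] /=; exact: ltn_trans wu uv.
by exists u; rewrite !inE ?uS ?uv // ltnn andbF.
Qed.

Lemma rank_ltE S u v : u \in S -> v \in S -> (rank_in S u < rank_in S v) = (u < v).
Proof.
move=> uS vS; case: (ltngtP u v) => [uv|vu|/val_inj->]; first exact: rank_mono.
  by apply/negbTE; rewrite -leqNgt ltnW // rank_mono.
by rewrite ltnn.
Qed.

Lemma rank_inj S : {in S &, injective (rank_in S)}.
Proof.
move=> u v uS vS e; case: (ltngtP u v) => [h|h|/val_inj//].
- by move: (rank_mono uS h); rewrite e ltnn.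
- by move: (rank_mono vS h); rewrite e ltnn.
Qed.

Lemma rank_surj S r : r < #|S| -> exists2 w, w \in S & rank_in S w = r.
Proof.
move=> rS.
have rS' : forall v, v \in S -> rank_in S v < (#|S|.-1).+1.
  by move=> v vS; rewrite prednK ?rank_lt //; exact: leq_ltn_trans (leq0n r) rS.
pose f (v : 'I_n) : 'I_(#|S|.-1).+1 := inord (rank_in S v).
have fi : {in S &, injective f}.
  move=> u v uS vS /(congr1 val) /=; rewrite /f (inordK (rS' _ uS)) (inordK (rS' _ vS)).
  exact: rank_inj.
have: f @: S == [set: 'I_(#|S|.-1).+1].
  rewrite eqEcard subsetT cardsT card_ord card_in_imset //.
  have S0 : 0 < #|S| by apply: leq_ltn_trans rS. 
  by rewrite prednK // leqnn.
move/eqP=> fS.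
have : (inord r : 'I_(#|S|.-1).+1) \in f @: S by rewrite fS inE.
case/imsetP=> w wS /(congr1 val) /=; rewrite /f (inordK (rS' _ wS)) inordK.
- by move=> ->; exists w.
- by rewrite prednK // (leq_ltn_trans (leq0n r) rS).
Qed.
Lemma compl_inP S v : v \in S ->
  compl_in S v \in S /\ rank_in S (compl_in S v) = #|S| - 1 - rank_in S v.
Proof.
move=> vS; rewrite /compl_in; case: pickP => [w /andP[wS /eqP->] //|H].
have hr : #|S| - 1 - rank_in S v < #|S|.
  have := rank_lt vS; lia.
have [w wS wr] := rank_surj hr.
by move: (H w); rewrite wS wr eqxx.
Qed.

Lemma compl_mem S v : v \in S -> compl_in S v \in S.
Proof. by case/compl_inP. Qed.

Lemma compl_lt S u v : u \in S -> v \in S ->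
  (compl_in S u < compl_in S v) = (v < u).
Proof.
move=> uS vS; have [cu ru] := compl_inP uS; have [cv rv] := compl_inP vS.
rewrite -(rank_ltE cu cv) ru rv -(rank_ltE vS uS).
have := rank_lt uS; have := rank_lt vS; lia.
Qed.

Lemma complK S v : v \in S -> compl_in S (compl_in S v) = v.
Proof.
move=> vS; have [cu ru] := compl_inP vS; have [ccu rcu] := compl_inP cu.
apply: (rank_inj ccu vS); rewrite rcu ru; have := rank_lt vS; lia.
Qed.

Lemma compl_injS S : {in S &, injective (compl_in S)}.
Proof. by move=> u v uS vS e; rewrite -(complK uS) e complK. Qed.

Lemma compl_imset S : compl_in S @: S = S.
Proof.
apply/eqP; rewrite eqEcard card_in_imset; last exact: compl_injS.
rewrite leqnn andbT; apply/subsetP=> w /imsetP[v vS ->]; exact: compl_mem.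
Qed.

Lemma rank_up S y : y \in S ->
  rank_in S y + #|[set w in S | y < w]| = #|S| - 1.
Proof.
move=> yS.
have := cardsID [set w : 'I_n | w < y] S.
have -> : S :&: [set w : 'I_n | w < y] = [set u in S | u < y].
  by apply/setP=> u; rewrite !inE.
have -> : S :\: [set w : 'I_n | w < y] = y |: [set w in S | y < w].
  apply/setP=> u; rewrite !inE; case: (ltngtP u y) => [h|h|/val_inj->].
  - by rewrite /= andbF orbF; apply/esym/negbTE/eqP => e; move: h; rewrite e ltnn.
  - by rewrite /= andbT; have -> : (u == y) = false by apply/negbTE/eqP => e; move: h; rewrite e ltnn.
  - by rewrite eqxx /= yS.
rewrite cardsU1 !inE ltnn andbF /= /rank_in => <-; by rewrite addnCA addKn.
Qed.

Lemma compl_img S S' x : S' \subset S -> x \in S' ->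
  compl_in (compl_in S @: S') (compl_in S x) = compl_in S (compl_in S' x).
Proof.
move=> sS xS'.
set phi := compl_in S.
have phiI : {in S' &, injective phi}.
  by move=> u v uS vS; apply: compl_injS; apply: (subsetP sS).
have rk : forall y, y \in S' -> rank_in (phi @: S') (phi y) = #|[set w in S' | y < w]|.
  move=> y yS; rewrite /rank_in.
  have -> : [set u in phi @: S' | u < phi y] = phi @: [set w in S' | y < w].
    apply/setP=> u; apply/idP/idP.
      case/setIdP=> /imsetP[w wS ->]; rewrite /phi compl_lt; try exact: (subsetP sS).
      by move=> yw; apply/imsetP; exists w => //; rewrite inE wS.
    case/imsetP=> w /setIdP[wS yw] ->.
    rewrite inE (imset_f _ wS) /= /phi compl_lt //; exact: (subsetP sS).
  rewrite card_in_imset //; move=> u v /setIdP[uS _] /setIdP[vS _].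
  exact: phiI.
have cx := compl_mem xS'.
have pxS : phi x \in phi @: S' by apply: imset_f.
have [cl rl] := compl_inP pxS.
have prS : phi (compl_in S' x) \in phi @: S' by apply: imset_f.
apply: (rank_inj cl prS); rewrite rl rk // rk // card_in_imset //.
have h1 := rank_up xS'; have h2 := rank_up cx.
have [_ rc] := compl_inP xS'.
have := rank_lt xS'. set N := #|S'|. set b := #|[set w in S' | x < w]|. set d := #|[set w in S' | compl_in S' x < w]|. lia.
Qed.

End Compl.

Lemma sum_split2 (f : nat -> nat) lo a hi : lo <= a -> a.+2 <= hi ->
  \sum_(lo <= k < hi) f k =
  \sum_(lo <= k < a) f k + f a + f a.+1 + \sum_(a.+2 <= k < hi) f k.
Proof.
move=> h1 h2; rewrite (@big_cat_nat _ _ _ a) //; last by apply: leq_trans h2; lia.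
rewrite (big_ltn (m:=a)); last lia.
rewrite (big_ltn (m:=a.+1)); last lia.
by rewrite /= !addnA.
Qed.

Definition tr (a b c : nat) : bool := ((a < b) && (b > c)) || ((a > b) && (b < c)).

Lemma tr_flip a b c a' b' c' :
  (a' < b') = (b < a) -> (b' < a') = (a < b) -> (b' < c') = (c < b) -> (c' < b') = (b < c) ->
  tr a' b' c' = tr a b c.
Proof. by rewrite /tr => -> -> -> ->; rewrite orbC. Qed.

Lemma tr_xor a b c : a != b -> b != c -> tr a b c = (a < b) (+) (b < c).
Proof.
rewrite /tr; case: (ltngtP a b) => //= _ _; case: (ltngtP b c) => //.
Qed.

Section Cmap.
Variable n : nat.
Implicit Types (p q : word n) (S : {set 'I_n}).

Lemma wvalO p k (h : k < n) : wval p k = p (Ordinal h).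
Proof.
rewrite /wval; case: eqP => [h'|]; last by rewrite h.
by rewrite (bool_irrelevance h' h).
Qed.

Lemma wvalE p (k : 'I_n) : wval p k = p k.
Proof. by case: k => k h; rewrite (wvalO p h). Qed.

Lemma suffixP i p v :
  reflect (exists2 k : 'I_n, i.-1 <= k & p k = v) (v \in suffix_set i p).
Proof.
rewrite inE; apply: (iffP existsP) => [[k /andP[h /eqP e]]|[k h e]].
  by exists k.
by exists k; rewrite h e eqxx.
Qed.

Lemma mem_suffix i p (k : 'I_n) : i.-1 <= k -> p k \in suffix_set i p.
Proof. by move=> h; apply/suffixP; exists k. Qed.

Lemma cmapE i p k :
  cmap i p k = if i.-1 <= k then compl_in (suffix_set i p) (p k) else p k.
Proof. by rewrite ffunE. Qed.

Lemma suffix_sub j i p : j <= i -> suffix_set i p \subset suffix_set j p.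
Proof.
move=> h; apply/subsetP=> v /suffixP[k hk <-]; apply: mem_suffix.
apply: leq_trans hk; lia.
Qed.

Lemma suffix_cmap_ge j i p : j <= i ->
  suffix_set i (cmap j p) = compl_in (suffix_set j p) @: suffix_set i p.
Proof.
move=> hji; apply/setP=> v; apply/idP/idP.
  case/suffixP=> k hk <-; rewrite cmapE ifT; last by apply: leq_trans hk; lia.
  by apply: imset_f; apply: mem_suffix.
case/imsetP=> w /suffixP[k hk <-] ->.
have -> : compl_in (suffix_set j p) (p k) = cmap j p k.
  by rewrite cmapE ifT //; apply: leq_trans hk; lia.
exact: mem_suffix.
Qed.

Lemma suffix_cmap_le j i p : j <= i -> suffix_set j (cmap i p) = suffix_set j p.
Proof.
move=> hji; apply/setP=> v; apply/idP/idP.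
  case/suffixP=> k hk <-; rewrite cmapE; case: ifP => hik.
    apply: (subsetP (suffix_sub p hji)); apply: compl_mem; exact: mem_suffix.
  exact: mem_suffix.
case/suffixP=> k hk <-; case: (leqP i.-1 k) => hik.
  have: p k \in compl_in (suffix_set i p) @: suffix_set i p.
    by rewrite compl_imset mem_suffix.
  case/imsetP=> w /suffixP[k' hk' <-] ->.
  have -> : compl_in (suffix_set i p) (p k') = cmap i p k' by rewrite cmapE hk'.
  apply: mem_suffix; apply: leq_trans hk'; lia.
have -> : p k = cmap i p k by rewrite cmapE leqNgt hik.
exact: mem_suffix.
Qed.

Lemma cmapK i p : cmap i (cmap i p) = p.
Proof.
apply/ffunP=> k; rewrite !ffunE (suffix_cmap_le p (leqnn i)).
by case: ifP => h; rewrite h // complK // mem_suffix.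
Qed.

Lemma cmap_comm j i p : j <= i -> cmap j (cmap i p) = cmap i (cmap j p).
Proof.
move=> hji; apply/ffunP=> k; rewrite !ffunE (suffix_cmap_le p hji) (suffix_cmap_ge p hji).
case: (leqP i.-1 k) => hi.
  have hj : j.-1 <= k by apply: leq_trans hi; lia.
  rewrite hj compl_img //; [exact: suffix_sub | exact: mem_suffix].
by [].
Qed.

Lemma wval_cmap_lt i p m : m < i.-1 -> wval (cmap i p) m = wval p m.
Proof.
move=> h; case: (ltnP m n) => hn.
  by rewrite !(wvalO _ hn) cmapE leqNgt h.
by rewrite /wval; case: eqP => // h'; move: hn; rewrite leqNgt h'.
Qed.

Lemma wval_cmap_ge i p (k : 'I_n) : i.-1 <= k ->
  wval (cmap i p) k = compl_in (suffix_set i p) (p k).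
Proof. by move=> h; rewrite wvalE cmapE h. Qed.

Lemma turn_far i p k : 3 <= i -> k.+1 < n -> k != i.-2 -> k != i.-1 ->
  turn (cmap i p) k = turn p k.
Proof.
move=> i3 kn h1 h2; rewrite /turn.
case: (ltnP k.+1 i.-1) => hk.
  rewrite !wval_cmap_lt //; lia.
have h0 : k.-1 < n by lia.
have h1' : k < n by lia.
rewrite -[k.-1]/(nat_of_ord (Ordinal h0)) -[k]/(nat_of_ord (Ordinal h1')).
rewrite -[k.+1]/(nat_of_ord (Ordinal kn)).
set o0 := Ordinal h0; set o1 := Ordinal h1'; set o2 := Ordinal kn.
have e0 : i.-1 <= o0 by rewrite /=; lia.
have e1 : i.-1 <= o1 by rewrite /=; lia.
have e2 : i.-1 <= o2 by rewrite /=; lia.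
rewrite !wval_cmap_ge // !wvalE.
have m0 := mem_suffix p e0; have m1 := mem_suffix p e1; have m2 := mem_suffix p e2.
by apply: tr_flip; rewrite compl_lt.
Qed.

Definition T i p := turn p i.-2 + turn p i.-1.

Lemma T_far i j p : 3 <= i -> 3 <= j -> j < n -> (i.+2 <= j) || (j.+2 <= i) ->
  T j (cmap i p) = T j p.
Proof.
move=> i3 j3 jn hij; rewrite /T !turn_far //; lia.
Qed.

End Cmap.

Section Gen.
Variable n : nat.
Implicit Types (p q : word n).

Lemma turnE p k : turn p k = tr (wval p k.-1) (wval p k) (wval p k.+1).
Proof. by []. Qed.

Lemma notin_suffix i p : injective p -> forall l : 'I_n, ~~ (i.-1 <= l) ->
  p l \notin suffix_set i p.
Proof.
move=> ip l hl; apply/suffixP => [[k hk /ip e]]; move: hl; by rewrite -e hk.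
Qed.

Lemma inj_cmap i p : injectiveb p -> injectiveb (cmap i p).
Proof.
move/injectiveP=> ip; apply/injectiveP => k l; rewrite !cmapE.
case: ifP => hk; case: ifP => hl.
- by move/(compl_injS (mem_suffix p hk) (mem_suffix p hl)) /ip.
- move=> e; have := compl_mem (mem_suffix p hk); rewrite e.
  by rewrite (negbTE (notin_suffix ip (negbT hl))).
- move=> e; have := compl_mem (mem_suffix p hl); rewrite -e.
  by rewrite (negbTE (notin_suffix ip (negbT hk))).
- exact: ip.
Qed.

Lemma inj_cmapE i p : injectiveb (cmap i p) = injectiveb p.
Proof.
apply/idP/idP; last exact: inj_cmap.
by move/(inj_cmap i); rewrite cmapK.
Qed.

Lemma T_pm1 i p : 3 <= i -> i < n -> injectiveb p ->
  (T i (cmap i p) == (T i p).+1) || (T i p == (T i (cmap i p)).+1).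
Proof.
case: i => [|[|[|j]]] // _ hn /injectiveP ip.
have h0 : j < n by lia.
have h1 : j.+1 < n by lia.
have h2 : j.+2 < n by lia.
set o2 := Ordinal h2; set o3 := Ordinal hn.
have m2 : p o2 \in suffix_set j.+3 p by apply: mem_suffix.
have m3 : p o3 \in suffix_set j.+3 p by apply: mem_suffix; rewrite /=.
have E0 : wval (cmap j.+3 p) j = wval p j by apply: wval_cmap_lt.
have E1 : wval (cmap j.+3 p) j.+1 = wval p j.+1 by apply: wval_cmap_lt.
have E2 : wval (cmap j.+3 p) j.+2 = compl_in (suffix_set j.+3 p) (p o2).
  exact: (wval_cmap_ge p (k:=o2)).
have E3 : wval (cmap j.+3 p) j.+3 = compl_in (suffix_set j.+3 p) (p o3).
  by apply: (wval_cmap_ge p (k:=o3)); rewrite /=.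
rewrite /T !turnE /= E0 E1 E2 E3 (wvalO p h0) (wvalO p h1) -/o2 -/o3 (wvalO p h2) (wvalO p hn) -/o2 -/o3.
set o0 := Ordinal h0; set o1 := Ordinal h1.
have dist : forall a b : 'I_n, a != b -> val (p a) != val (p b).
  by move=> a b ab; apply/eqP => /val_inj /ip e; move: ab; rewrite e eqxx.
have ab : val (p o0) != val (p o1) by apply: dist; apply/eqP => /(congr1 val) /=; lia.
have bc : val (p o1) != val (p o2) by apply: dist; apply/eqP => /(congr1 val) /=; lia.
have cd : val (p o2) != val (p o3) by apply: dist; apply/eqP => /(congr1 val) /=; lia.
have nb : p o1 \notin suffix_set j.+3 p.
  by apply: (notin_suffix ip); rewrite /o1 /= ltnn.
have c2 := compl_mem m2; have c3 := compl_mem m3.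
have bc' : val (p o1) != val (compl_in (suffix_set j.+3 p) (p o2)).
  by apply/eqP => /val_inj e; move: nb; rewrite e c2.
have cd' : val (compl_in (suffix_set j.+3 p) (p o2)) != val (compl_in (suffix_set j.+3 p) (p o3)).
  apply/eqP => /val_inj /(compl_injS m2 m3) e; move: cd; by rewrite e eqxx.
have lt' := compl_lt m2 m3.
rewrite (tr_xor ab bc) (tr_xor bc cd) (tr_xor ab bc') (tr_xor bc' cd') lt'.
have dc : (val (p o3) < val (p o2)) = ~~ (val (p o2) < val (p o3)).
  by move: cd; case: ltngtP.
rewrite dc.
by case: (val (p o0) < val (p o1)); case: (val (p o1) < val (p o2));
   case: (val (p o1) < val (compl_in (suffix_set j.+3 p) (p o2)));
   case: (val (p o2) < val (p o3)).
Qed.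

Lemma run_cmap i p : 3 <= i -> i < n ->
  run (cmap i p) + T i p = run p + T i (cmap i p).
Proof.
case: i => [|[|[|j]]] // _ hn.
rewrite /run /T /=.
rewrite (@sum_split2 (fun k => nat_of_bool (turn (cmap j.+3 p) k)) 1 j.+1 n.-1) //; last lia.
rewrite (@sum_split2 (fun k => nat_of_bool (turn p k)) 1 j.+1 n.-1) //; last lia.
rewrite (@eq_big_nat _ _ _ 1 j.+1 (fun k => nat_of_bool (turn (cmap j.+3 p) k)) (fun k => nat_of_bool (turn p k))); last first.
  by move=> k hk; rewrite turn_far //; lia.
rewrite (@eq_big_nat _ _ _ j.+3 n.-1 (fun k => nat_of_bool (turn (cmap j.+3 p) k)) (fun k => nat_of_bool (turn p k))); last first.
  by move=> k hk; rewrite turn_far //; lia.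
lia.
Qed.

Definition beta i p := T i (cmap i p) < T i p.

Definition gen i := [&& odd i, 3 <= i & i < n].

Lemma beta_self i p : gen i -> injectiveb p -> beta i (cmap i p) = ~~ beta i p.
Proof.
case/and3P=> _ i3 hn ip; rewrite /beta cmapK.
by case/orP: (T_pm1 i3 hn ip) => /eqP ->; lia.
Qed.

Lemma beta_other i j p : gen i -> gen j -> i != j -> beta j (cmap i p) = beta j p.
Proof.
case/and3P=> oi i3 hi; case/and3P=> oj j3 hj nij.
have far : (i.+2 <= j) || (j.+2 <= i) by lia.
rewrite /beta.
have -> : cmap j (cmap i p) = cmap i (cmap j p).
  case: (leqP j i) => h; first exact: cmap_comm.
  by rewrite (cmap_comm p (ltnW h)).
by rewrite !(T_far (i:=i) (j:=j)).
Qed.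

End Gen.

Section Count.
Variable n : nat.
Hypothesis hn : 4 <= n.
Implicit Types (p q : word n).

Lemma Cidx_gen i : Cidx n i -> gen n i.
Proof.
rewrite /Cidx /gen; case: ifP => _ /and3P[o h1 h2]; rewrite o h1 /=; lia.
Qed.

Lemma Cidx_t t : Cidx n t.*2.+1 = (0 < t) && (t <= (n - 2)./2).
Proof.
rewrite /Cidx /= odd_double /=; case: ifP => hn'; apply/idP/idP.
- case/andP => a b; apply/andP; split; lia.
- case/andP => a b; apply/andP; split; lia.
- case/andP => a b; apply/andP; split; lia.
- case/andP => a b; apply/andP; split; lia.
Qed.

Definition cnt p := \sum_(i < n.+1 | Cidx n i) beta i p.

Lemma cnt_step (i : 'I_n.+1) p : Cidx n i -> injectiveb p ->
  run (cmap i p) + cnt p = run p + cnt (cmap i p).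
Proof.
move=> ci ip; have gi := Cidx_gen ci.
rewrite /cnt (bigD1 i) //= (bigD1 i ci) /=.
rewrite (eq_bigr (fun j : 'I_n.+1 => nat_of_bool (beta j p)) (F1 := fun j : 'I_n.+1 => nat_of_bool (beta j (cmap i p))) (P := fun j : 'I_n.+1 => Cidx n j && (j != i))); last first.
  move=> j /andP[cj nji]; rewrite beta_other //; first exact: Cidx_gen.
  by apply: contra nji => /eqP e; apply/eqP/val_inj.
rewrite beta_self //.
have := run_cmap p (n:=n) (i:=i); case/and3P: gi => _ i3 hi.
move=> /(_ i3 hi) e.
case/orP: (T_pm1 i3 hi ip) => /eqP h.
  have -> : beta i p = false by rewrite /beta h ltnNge leqnSn.
  rewrite h in e; rewrite /=.
  set s := \sum_(i0 < n.+1 | Cidx n i0 && (i0 != i)) beta i0 p; lia.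
have -> : beta i p = true by rewrite /beta h ltnSn.
rewrite h in e; rewrite /=.
set s := \sum_(i0 < n.+1 | Cidx n i0 && (i0 != i)) beta i0 p; lia.
Qed.

Lemma path_inv s p : injectiveb p -> path (@gstep n) p s ->
  injectiveb (last p s) && (run (last p s) + cnt p == run p + cnt (last p s)).
Proof.
elim: s p => [|x s IH] p ip /=; first by rewrite ip eqxx.
case/andP => /existsP[i /andP[ci /eqP ->]] pth.
have ip' := inj_cmap i ip.
case/andP: (IH _ ip' pth) => -> /eqP e /=.
have h := cnt_step ci ip; apply/eqP; lia.
Qed.

Lemma minimalP q : minimal_in_orbit q =
  injectiveb q && [forall i : 'I_n.+1, Cidx n i ==> ~~ beta i q].
Proof.
apply/idP/idP.
  case/andP => iq /forallP H; rewrite iq /=; apply/forallP => i.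
  apply/implyP => ci; apply/negP => b.
  have : Defs.in_orbit q (cmap i q).
    by apply: connect1; apply/existsP; exists i; rewrite ci eqxx.
  move/(implyP (H _)).
  case/and3P: (Cidx_gen ci) => _ i3 hi.
  have := run_cmap q i3 hi; move: b; rewrite /beta; lia.
case/andP => iq /forallP H; rewrite /minimal_in_orbit iq /=.
apply/forallP => q'; apply/implyP => /connectP [s pth ->].
case/andP: (path_inv iq pth) => _ /eqP.
have -> : cnt q = 0.
  rewrite /cnt big1 // => i ci; by have := implyP (H i) ci; case: (beta i q).
by rewrite addn0 => ->; rewrite leq_addr.
Qed.

Definition P k p := injectiveb p && all (fun t => ~~ beta t.*2.+1 p) (iota 1 k).

Lemma P_S k p : P k.+1 p = P k p && ~~ beta k.+1.*2.+1 p.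
Proof.
rewrite /P; have -> : iota 1 k.+1 = iota 1 k ++ [:: k.+1] by rewrite -(addn1 k) iotaD add1n addn1.
by rewrite all_cat /= andbT andbA.
Qed.

Lemma gen_t t : 0 < t -> t <= (n - 2)./2 -> gen n t.*2.+1.
Proof. move=> h1 h2; rewrite /gen /= odd_double /=; apply/andP; split; lia. Qed.

Lemma step k : k < (n - 2)./2 ->
  ((\sum_(p : word n | P k p) 'X^(run p) : {poly int}) =
  (1 + 'X) * \sum_(p : word n | P k.+1 p) 'X^(run p))%R.
Proof.
move=> hk; set i := k.+1.*2.+1.
have gi : gen n i by apply: gen_t; lia.
have cinj : injective (cmap (n:=n) i) by apply: (can_inj (cmapK i)).
rewrite (bigID (fun p => beta i p)) /=.
rewrite (reindex_inj cinj) /=.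
rewrite (eq_bigl (fun q => P k.+1 q) (P1 := fun j => P k (cmap i j) && beta i (cmap i j))); last first.
  move=> q; rewrite P_S /P inj_cmapE.
  case iq: (injectiveb q) => //=.
  rewrite beta_self //.
  congr (_ && _).
  apply: eq_in_all => t; rewrite mem_iota => /andP[t1 t2].
  rewrite beta_other //; first by apply: gen_t; lia.
  by rewrite /i; apply/eqP; lia.
rewrite (eq_bigl (fun q => P k.+1 q) (P1 := fun q => P k q && ~~ beta i q)); last first.
  by move=> q; rewrite P_S.
rewrite (eq_bigr (fun q => 'X * 'X^(run q))%R); last first.
  move=> q; rewrite P_S => /andP[/andP[iq _] nb].
  case/and3P: gi => _ i3 hi.
  have e := run_cmap q i3 hi.
  case/orP: (T_pm1 i3 hi iq) => /eqP h.
    have -> : run (cmap i q) = (run q).+1 by rewrite h in e; lia.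
    by rewrite exprS.
  by move: nb; rewrite /beta h ltnSn.
by rewrite -big_distrr /= mulrDl mul1r addrC.
Qed.

Lemma sum_P k : k <= (n - 2)./2 ->
  ((\sum_(p : word n | P 0 p) 'X^(run p) : {poly int}) =
  (1 + 'X) ^+ k * \sum_(p : word n | P k p) 'X^(run p))%R.
Proof.
elim: k => [|k IH] hk; first by rewrite expr0 mul1r.
by rewrite IH ?(ltnW hk) // step // exprSr mulrA.
Qed.

End Count.

Theorem mainTheorem4 (n : nat) (hn : 4 <= n) :
  let m := (n - 2)./2 in
  Rpoly n = ((1 + 'X) ^+ m * \sum_(q : word n | minimal_in_orbit q) 'X^(run q))%R
  /\ ((1 + 'X) ^+ m %| Rpoly n)%R.
Proof.
move=> m.
have E : Rpoly n = ((1 + 'X) ^+ m * \sum_(q : word n | minimal_in_orbit q) 'X^(run q))%R.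
  rewrite /Rpoly (eq_bigl (P 0)); last by move=> p; rewrite /P /= andbT.
  rewrite (sum_P hn (leqnn m)); congr (_ * _)%R.
  apply: eq_bigl => q; rewrite minimalP //= /P; congr (_ && _).
  apply/allP/forallP.
    move=> H i; apply/implyP => ci.
    have e : (i./2).*2.+1 = i.
      move: ci; rewrite /Cidx; case: ifP => _ /and3P[o _ _]; lia.
    have := H (i./2); rewrite e; apply; rewrite mem_iota.
    move: ci; rewrite -{1}e Cidx_t // => /andP[a b]; apply/andP; split; lia.
  move=> H t; rewrite mem_iota => /andP[t1 t2].
  have tn : t.*2.+1 < n.+1 by lia.
  have := implyP (H (Ordinal tn)); rewrite /= Cidx_t //; apply; apply/andP; split; lia.
split => //; rewrite E; exact: dvdp_mulIl.
Qed.
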